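(* If $w\ge 3$, then $m_3^{(1)}(3,w)$ equals the Griesmer upper bound, i.e. the largest integer $n$ with $n\ge g_3^{(2)}(4,n-w)$. Moreover, $m_3^{(1)}(3,2)=10$.
   Context: For a prime power $q$ and $N\ge1$, a multiset of points in $\mathrm{PG}(N,q)$ is a map $\mathcal{K}$ from the points to $\mathbb{Z}_{\ge0}$, with $\mathcal{K}(S)=\sum_{P\in S}\mathcal{K}(P)$; its cardinality is $\mathcal{K}(\mathrm{PG}(N,q))$. Dimensions are projective (lines have dimension 1). For $0\le r\le N-1$ and a positive integer $w$, $m_q^{(r)}(N,w)$ is the maximum cardinality of a multiset of points in $\mathrm{PG}(N,q)$ such that every $r$-dimensional subspace has multiplicity at most $w$. Let $v_j=(q^j-1)/(q-1)$ and, for $1\le s\le k$, $g_q^{(s)}(k,d)=d+\sum_{i=1}^{k-s}\lceil d/(q^iv_s)\rceil$. The Griesmer upper bound for $m_q^{(r)}(N,w)$ is the largest integer $n$ with $n\ge g_q^{(N-r)}(N+1,n-w)$. *)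

(* Defs.v *)
From mathcomp Require Import all_boot all_order all_algebra all_field.
Set Implicit Arguments. Unset Strict Implicit. Unset Printing Implicit Defensive.

Section PG.
Variable F : finFieldType.
Variable N : nat.

(* Vectors of F^(N+1); PG(N,q) with q = #|F| is the set of its subspaces. *)
Definition vec := 'rV[F]_(N.+1).

(* S is a (vector-)subspace of F^(N+1) of vector dimension d,
   i.e. a projective subspace of projective dimension d-1. *)
Definition is_subspace (d : nat) (S : {set vec}) : bool :=
  [exists A : 'M[F]_(d, N.+1), (\rank A == d) && (S == [set v : vec | (v <= A)%MS])].

Definition is_point (S : {set vec}) : bool := is_subspace 1 S.
Definition is_proj_subspace (r : nat) (S : {set vec}) : bool := is_subspace r.+1 S.

(* A multiset of points: a map from points to nat (values off points are ignored). *)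
Definition mult_of (K : {set vec} -> nat) (S : {set vec}) : nat :=
  \sum_(P : {set vec} | is_point P && (P \subset S)) K P.

Definition card_ms (K : {set vec} -> nat) : nat :=
  \sum_(P : {set vec} | is_point P) K P.

Definition admissible (r w : nat) (K : {set vec} -> nat) : Prop :=
  forall S : {set vec}, is_proj_subspace r S -> mult_of K S <= w.

Definition is_m (r w m : nat) : Prop :=
  (exists K, admissible r w K /\ card_ms K = m) /\
  (forall K, admissible r w K -> card_ms K <= m).

End PG.

Definition ceil_div (a b : nat) : nat := (a + b.-1) %/ b.

Definition vq (q j : nat) : nat := (q ^ j - 1) %/ (q - 1).

Definition griesmer_g (q s k d : nat) : nat :=
  d + \sum_(1 <= i < (k - s).+1) ceil_div d (q ^ i * vq q s).

Definition griesmer_ub (q N r w n : nat) : Prop :=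
  griesmer_g q (N - r) N.+1 (n - w) <= n /\
  (forall n', griesmer_g q (N - r) N.+1 (n' - w) <= n' -> n' <= n).
Arguments is_m F N r w m : clear implicits.

(* Main.v *)
Require Import Defs.
From mathcomp Require Import all_boot all_order all_algebra all_field.
From mathcomp Require Import zify ring.
Set Implicit Arguments. Unset Strict Implicit. Unset Printing Implicit Defensive.
Import GRing.Theory.
Local Open Scope ring_scope.

Notation F := 'F_3.
Notation V := ('rV[F]_4).
Definition sp m (A : 'M[F]_(m,4)) : {set V} := [set v : V | (v <= A)%MS].

Lemma in_sp m (A : 'M[F]_(m,4)) v : (v \in sp A) = (v <= A)%MS.
Proof. by rewrite inE. Qed.

Lemma card_F : #|F| = 3%N.
Proof. by rewrite card_Fp. Qed.

Lemma card_sp m (A : 'M[F]_(m,4)) : #|sp A| = (3 ^ \rank A)%N.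
Proof.
have -> : sp A = [set v *m row_base A | v in 'rV_(\rank A)].
  apply/setP => v; rewrite in_sp -(eq_row_base A).
  by apply/submxP/imsetP => [[u ->]|[u _ ->]]; exists u.
rewrite card_imset ?card_mx ?card_F ?mul1n //.
have [B AB1] := row_freeP (row_base_free A); apply: can_inj (mulmx^~ B) _ => v.
by rewrite -mulmxA AB1 mulmx1.
Qed.

Lemma F3_cases (a : F) : [\/ a = 0, a = 1 | a = -1].
Proof.
case: a => [[|[|[|m]]] Hm] //.
- by apply: Or31; apply: val_inj.
- by apply: Or32; apply: val_inj.
- by apply: Or33; apply: val_inj.
Qed.

Lemma two_neq0 : (2 : F) != 0.
Proof. by vm_compute. Qed.

Lemma neg_neq (p : V) : p != 0 -> p != - p.
Proof.
move=> p0; apply/eqP => h; move: p0; have : 2 *: p = 0.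
  by rewrite scaler_nat mulr2n {1}h addNr.
by move/eqP; rewrite scaler_eq0 (negbTE two_neq0) /= => ->.
Qed.

Lemma sp_sub m (A : 'M[F]_(m,4)) (x : V) : (sp x \subset sp A) = (x <= A)%MS.
Proof.
apply/subsetP/idP => [h|h y]; first by have := h x; rewrite !in_sp submx_refl => /(_ isT).
by rewrite !in_sp => /submx_trans; apply.
Qed.

Lemma sp_subset m n (A : 'M[F]_(m,4)) (B : 'M[F]_(n,4)) : (A <= B)%MS -> sp A \subset sp B.
Proof. by move=> h; apply/subsetP => y; rewrite !in_sp => /submx_trans; apply. Qed.

Lemma sp_eq m n (A : 'M[F]_(m,4)) (B : 'M[F]_(n,4)) : (A <= B)%MS -> (B <= A)%MS -> sp A = sp B.
Proof. by move=> h1 h2; apply/eqP; rewrite eqEsubset !sp_subset. Qed.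

Lemma sp_eqE (x y : V) : (sp x == sp y) = (x <= y)%MS && (y <= x)%MS.
Proof. by rewrite eqEsubset !sp_sub. Qed.

Lemma is_point_sp (x : V) : x != 0 -> is_point (sp x).
Proof.
move=> x0; apply/existsP; exists x; rewrite rank_rV x0 /=.
by apply/eqP.
Qed.

Lemma is_pointP (P : {set V}) : is_point P -> exists2 p : V, p != 0 & P = sp p.
Proof.
case/existsP => A /andP [rA /eqP ->]; exists A => //.
by rewrite -mxrank_eq0 (eqP rA).
Qed.

Lemma sp_scale (x : V) (a : F) : a != 0 -> sp (a *: x) = sp x.
Proof. by move=> a0; apply: sp_eq; rewrite ?scalemx_sub // eqmx_scale. Qed.

Lemma sp_opp (x : V) : sp (- x) = sp x.
Proof. by apply: sp_eq; rewrite eqmx_opp. Qed.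

Lemma fiber (x : V) : x != 0 ->
  [set y : V | (y != 0) && (sp y == sp x)] = [set x; -x].
Proof.
move=> x0; apply/setP => y; rewrite !inE sp_eqE.
apply/idP/idP.
  case/and3P => y0 /sub_rVP [a ya] _; move: y0; rewrite ya.
  case: (F3_cases a) => ->; first by rewrite scale0r eqxx.
    by rewrite scale1r eqxx.
  by rewrite scaleN1r eqxx orbT.
case/orP => /eqP ->; first by rewrite x0 submx_refl.
by rewrite oppr_eq0 x0 !eqmx_opp !submx_refl.
Qed.

Lemma sum_pts m (A : 'M[F]_(m,4)) (g : V -> nat) :
  (\sum_(y : V | (y <= A)%MS && (y != 0%R)) g y =
   \sum_(P | is_point P && (P \subset sp A))
       \sum_(y : V | (y != 0%R) && (sp y == P)) g y)%N.
Proof.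
rewrite (partition_big (fun y => sp y) (fun P => is_point P && (P \subset sp A))).
  apply: eq_bigr => P /andP [_ PA]; apply: eq_bigl => y.
  case y0: (y != 0); rewrite ?andbF ?andbT //=.
  case e: (sp y == P); rewrite ?andbF ?andbT //.
  by rewrite -sp_sub (eqP e).
by move=> y /andP [yA y0]; rewrite is_point_sp // sp_sub.
Qed.

Lemma sum_fiber (p : V) (g : V -> nat) : p != 0 ->
  (\sum_(y : V | (y != 0%R) && (sp y == sp p)) g y = g p + g (- p)%R)%N.
Proof.
move=> p0.
rewrite (eq_bigl (fun y => y \in [set p; -p])); last first.
  by move=> y; rewrite -(fiber p0) inE.
rewrite big_setU1 ?big_set1 //= inE; exact: neg_neq.
Qed.

Lemma L0K m (A : 'M[F]_(m,4)) (K : {set V} -> nat) :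
  (\sum_(y : V | (y <= A)%MS && (y != 0%R)) K (sp y) = 2 * mult_of K (sp A))%N.
Proof.
rewrite sum_pts /mult_of big_distrr /=; apply: eq_bigr => P /andP [/is_pointP [p p0 ->] _].
by rewrite sum_fiber // sp_opp mul2n addnn.
Qed.

Lemma sub_colL m (B : 'M[F]_(m,4)) (y : V) : (B <= col_mx B y)%MS.
Proof. by rewrite -addsmxE addsmxSl. Qed.
Lemma sub_colR m (B : 'M[F]_(m,4)) (y : V) : (y <= col_mx B y)%MS.
Proof. by rewrite -addsmxE addsmxSr. Qed.

Lemma sub_rank_eq m n (A : 'M[F]_(m,4)) (B : 'M[F]_(n,4)) :
  (A <= B)%MS -> (\rank B <= \rank A)%N -> (B <= A)%MS.
Proof. by move=> s r; have [_ <-] := mxrank_leqif_sup s; rewrite eqn_leq r mxrankS. Qed.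

Lemma rank_col_notin m (B : 'M[F]_(m,4)) (y : V) :
  ~~ (y <= B)%MS -> \rank (col_mx B y) = (\rank B).+1.
Proof.
move=> yB.
have y0 : y != 0 by apply: contraNneq yB => ->; rewrite sub0mx.
have ry : \rank y = 1%N by rewrite rank_rV y0.
have : (\rank (B + y)%MS + \rank (B :&: y)%MS = \rank B + \rank y)%N by rewrite mxrank_sum_cap.
rewrite ry addsmxE.
have r1 : (\rank (B :&: y)%MS <= 1)%N by have := mxrankS (capmxSr B y); rewrite ry.
have r2 : \rank (B :&: y)%MS != 1%N.
  apply/negP => /eqP h.
  have hh : (y <= B :&: y)%MS by apply: sub_rank_eq; rewrite ?capmxSr // h ry.
  by move: yB; rewrite (submx_trans hh (capmxSl _ _)).
have -> : \rank (B :&: y)%MS = 0%N by lia.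
by rewrite addn0 => ->; rewrite addn1.
Qed.

Lemma exch m (B : 'M[F]_(m,4)) (x y : V) : ~~ (x <= B)%MS -> ~~ (y <= B)%MS ->
  (x <= col_mx B y)%MS -> (y <= col_mx B x)%MS.
Proof.
move=> xB yB h.
have s : (col_mx B x <= col_mx B y)%MS by rewrite col_mx_sub sub_colL h.
have := sub_rank_eq s; rewrite !rank_col_notin // leqnn => /(_ isT).
exact: submx_trans (sub_colR B y).
Qed.

Lemma card_diff m m' (B : 'M[F]_(m,4)) (D : 'M[F]_(m',4)) : (B <= D)%MS ->
  #|[pred y : V | (y <= D)%MS && ~~ (y <= B)%MS]| = (3 ^ \rank D - 3 ^ \rank B)%N.
Proof.
move=> BD; rewrite -!card_sp.
transitivity #|sp D :\: sp B|; first by apply: eq_card => y; rewrite !inE andbC.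
by rewrite cardsD (setIidPr (sp_subset BD)).
Qed.

Lemma sum_const_card (P : pred V) (c : nat) : (\sum_(y | P y) c = #|P| * c)%N.
Proof. by rewrite sum_nat_const. Qed.

Lemma SI m m' (B : 'M[F]_(m,4)) (D : 'M[F]_(m',4)) (k : V -> nat) : (B <= D)%MS ->
 (\sum_(y : V | (y <= D)%MS && ~~ (y <= B)%MS) \sum_(x : V | (x <= col_mx B y)%MS && (x != 0%R)) k x
 = (3^\rank D - 3^\rank B) * \sum_(x : V | (x <= B)%MS && (x != 0%R)) k x
 + (3^(\rank B).+1 - 3^\rank B) * \sum_(x : V | (x <= D)%MS && ~~ (x <= B)%MS) k x)%N.
Proof.
move=> BD.
rewrite (exchange_big_dep (fun x : V => (x <= D)%MS && (x != 0%R))) /=; last first.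
  move=> y x /andP [yD _] /andP [xc ->]; rewrite andbT.
  by apply: submx_trans xc _; rewrite col_mx_sub BD yD.
rewrite (bigID (fun x : V => (x <= B)%MS)) /=.
rewrite !big_distrr /=.
congr (_ + _)%N.
- apply: eq_big => x.
    case xB: (x <= B)%MS; rewrite ?andbF ?andbT //= (submx_trans xB BD) //.
  move=> /andP [/andP [_ x0] xB].
  rewrite sum_const_card; congr (_ * _)%N.
  rewrite -(card_diff BD); apply: eq_card => y; rewrite unfold_in /= !inE x0 ?andbT.
  case: ((y <= D)%MS && ~~ (y <= B)%MS) => //=.
  by apply: submx_trans xB (sub_colL _ _).
- apply: eq_big => x.
    case xB: (x <= B)%MS; rewrite ?andbF ?andbT //=.
    case xD: (x <= D)%MS => //=.
    by apply: contraFN xB => /eqP ->; rewrite sub0mx.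
  move=> /andP [/andP [xD x0] xB].
  rewrite sum_const_card; congr (_ * _)%N.
  rewrite -(rank_col_notin xB) -(card_diff (sub_colL B x)); apply: eq_card => y; rewrite unfold_in /= !inE x0 ?andbT.
  apply/idP/idP.
    case/andP => /andP [_ yB] h; by rewrite yB andbT; apply: exch.
  case/andP => yc yB; rewrite yB andbT.
  by rewrite (submx_trans yc) ?col_mx_sub ?BD ?xD //= exch.
Qed.

Lemma is_line (A : 'M[F]_(2,4)) : \rank A = 2%N -> is_proj_subspace 1 (sp A).
Proof. move=> h; rewrite /is_proj_subspace /is_subspace; apply/existsP; exists A; apply/andP; split; by apply/eqP. Qed.

Lemma pt_sub_pt (p q : V) : p != 0 -> (p <= q)%MS -> (q <= p)%MS.
Proof.
move=> p0 pq; apply: sub_rank_eq => //.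
by rewrite (rank_rV p) p0; have := rank_leq_row q.
Qed.

Lemma sum_pt (q : V) (K : {set V} -> nat) : q != 0 ->
  (\sum_(x : V | (x <= q)%MS && (x != 0%R)) K (sp x) = 2 * K (sp q))%N.
Proof.
move=> q0.
rewrite (eq_bigl (fun x : V => (x != 0%R) && (sp x == sp q))); last first.
  move=> x; rewrite sp_eqE andbC; case x0: (x != 0) => //=.
  by case xq: (x <= q)%MS; rewrite //= pt_sub_pt.
rewrite sum_fiber //.
by rewrite sp_opp addnn mul2n.
Qed.

Lemma sum_all (K : {set V} -> nat) :
  (\sum_(x : V | (x <= (1%:M : 'M[F]_4))%MS && (x != 0%R)) K (sp x) = 2 * card_ms K)%N.
Proof.
rewrite L0K /mult_of /card_ms; congr (_ * _)%N; apply: eq_bigl => P.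
case: (is_point P) => //=; apply/subsetP => x _; by rewrite in_sp submx1.
Qed.

Lemma sum_all_split (K : {set V} -> nat) (q : V) : q != 0 ->
  (2 * K (sp q) + \sum_(x : V | (x <= (1%:M : 'M[F]_4))%MS && ~~ (x <= q)%MS) K (sp x)
    = 2 * card_ms K)%N.
Proof.
move=> q0; rewrite -sum_all [in RHS](bigID (fun x : V => (x <= q)%MS)) /= -sum_pt //.
congr (_ + _)%N; apply: eq_bigl => x.
  by rewrite submx1 /=; case: (x <= q)%MS; rewrite ?andbT ?andbF.
rewrite submx1 /=; case xq: (x <= q)%MS; rewrite ?andbT ?andbF //=.
apply: esym; by apply: contraFN xq => /eqP ->; rewrite sub0mx.
Qed.

Lemma A_bound (K : {set V} -> nat) (t : nat) (q : V) : q != 0 ->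
  (forall S, is_proj_subspace 1 S -> mult_of K S <= t)%N ->
  (card_ms K + 12 * K (sp q) <= 13 * t)%N.
Proof.
move=> q0 hl.
have := SI (fun x => K (sp x)) (submx1 q).
rewrite mxrank1 rank_rV q0 sum_pt //.
have -> : (3 ^ 4 - 3 ^ 1 = 78)%N by [].
have -> : (3 ^ 2 - 3 ^ 1 = 6)%N by [].
have := sum_all_split K q0.
set S1 := (\sum_(x | _) _)%N.
move=> e1 e2.
have : (\sum_(y : V | (y <= (1%:M : 'M[F]_4))%MS && ~~ (y <= q)%MS)
   \sum_(x : V | (x <= col_mx q y)%MS && (x != 0%R)) K (sp x) <= 78 * (2 * t))%N.
  have -> : 78%N = #|[pred y : V | (y <= (1%:M : 'M[F]_4))%MS && ~~ (y <= q)%MS]|.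
    by rewrite card_diff ?submx1 // mxrank1 rank_rV q0.
  rewrite -sum_const_card; apply: leq_sum => y /andP [_ yq].
  rewrite L0K leq_mul2l /=; apply: hl; apply: is_line.
  by have := rank_col_notin yq; rewrite rank_rV q0.
rewrite e2; lia.
Qed.

Lemma sum_split m m' (B : 'M[F]_(m,4)) (D : 'M[F]_(m',4)) (k : V -> nat) : (B <= D)%MS ->
  (\sum_(x : V | (x <= B)%MS && (x != 0%R)) k x + \sum_(x : V | (x <= D)%MS && ~~ (x <= B)%MS) k x
    = \sum_(x : V | (x <= D)%MS && (x != 0%R)) k x)%N.
Proof.
move=> BD; rewrite [in RHS](bigID (fun x : V => (x <= B)%MS)) /=.
congr (_ + _)%N; apply: eq_bigl => x.
  by case xB: (x <= B)%MS; rewrite ?andbT ?andbF //= (submx_trans xB BD).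
case xB: (x <= B)%MS; rewrite ?andbT ?andbF //=.
case: (x <= D)%MS => //=.
apply: esym; by apply: contraFN xB => /eqP ->; rewrite sub0mx.
Qed.

Lemma sum_pos (P : pred V) (f : V -> nat) : (0 < \sum_(i | P i) f i)%N -> exists2 i, P i & (0 < f i)%N.
Proof.
move=> h; apply/exists_inP; apply: contraLR h; rewrite negb_exists_in => /forall_inP H.
rewrite -leqNgt leqn0 sum_nat_eq0; apply/forall_inP => x /H; by rewrite lt0n negbK.
Qed.

Lemma sum_gt (P : pred V) (f : V -> nat) c : (#|P| * c < \sum_(i | P i) f i)%N -> exists2 i, P i & (c < f i)%N.
Proof.
move=> h; apply/exists_inP; apply: contraLR h; rewrite negb_exists_in => /forall_inP H.
rewrite -leqNgt -sum_const_card; apply: leq_sum => i /H; by rewrite -leqNgt.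
Qed.

Lemma sum_ge (P : pred V) (f : V -> nat) c : (forall i, P i -> c <= f i)%N -> (#|P| * c <= \sum_(i | P i) f i)%N.
Proof. move=> H; rewrite -sum_const_card; exact: leq_sum. Qed.

Lemma sum_le (P : pred V) (f : V -> nat) c : (forall i, P i -> f i <= c)%N -> (\sum_(i | P i) f i <= #|P| * c)%N.
Proof. move=> H; rewrite -sum_const_card; exact: leq_sum. Qed.

Lemma sum_eq_max (P : pred V) (f : V -> nat) c : (forall i, P i -> f i <= c)%N ->
  (#|P| * c <= \sum_(i | P i) f i)%N -> forall i, P i -> f i = c.
Proof.
move=> H h i Pi; apply/eqP; rewrite eqn_leq H //=; rewrite leqNgt; apply/negP => lt.
move: h; rewrite (bigD1 i) //= (cardD1 i).
have -> : (i \in P) = true by [].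
have : (\sum_(j | P j && (j != i)) f j <= #|[predD1 P & i]| * c)%N.
  rewrite (eq_card (B := [pred j | P j && (j != i)])); last by move=> j; rewrite !inE andbC.
  by apply: sum_le => j /andP [Pj _]; exact: H.
set a := (\sum_(_ | _) _)%N; set b := #|_|. move=> h1 h2. nia.
Qed.

Lemma is_line2 (B : 'M[F]_(1,4)) (y : V) : B != 0 -> ~~ (y <= B)%MS -> is_proj_subspace 1 (sp (col_mx B y)).
Proof. move=> B0 yB; apply: is_line; by have := rank_col_notin yB; rewrite rank_rV B0. Qed.

Lemma card_nz m (A : 'M[F]_(m,4)) :
  #|[pred y : V | (y <= A)%MS && (y != 0%R)]| = (3 ^ \rank A - 1)%N.
Proof.
have h := @card_diff 1 m 0 A (sub0mx _ _); rewrite mxrank0 expn0 in h; rewrite -h.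
apply: eq_card => y; rewrite !inE; congr (_ && _); apply/idP/idP; [apply: contra => /submx0null ->; exact: eqxx | apply: contra => /eqP ->; exact: sub0mx].
Qed.

Lemma lineP (S : {set V}) : is_proj_subspace 1 S -> exists2 A : 'M[F]_(2,4), \rank A = 2%N & S = sp A.
Proof.
rewrite /is_proj_subspace /is_subspace => /existsP [A /andP [/eqP rA /eqP ->]].
by exists A.
Qed.

Lemma line_le4 (K : {set V} -> nat) (s : nat) (S : {set V}) : (forall x : V, x != 0%R -> K (sp x) <= s)%N ->
  is_proj_subspace 1 S -> (mult_of K S <= 4 * s)%N.
Proof.
move=> H /lineP [A rA ->].
have : (2 * mult_of K (sp A) <= 8 * s)%N.
  rewrite -L0K; have -> : 8%N = #|[pred y : V | (y <= A)%MS && (y != 0%R)]| by rewrite card_nz rA.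
  by apply: sum_le => x /andP [_ x0]; apply: H.
lia.
Qed.

Lemma nz_exists : exists q : V, q != 0.
Proof.
have : (0 < #|[pred y : V | (y <= (1%:M : 'M[F]_4))%MS && (y != 0%R)]|)%N by rewrite card_nz mxrank1.
by case/card_gt0P => q; rewrite inE => /andP [_ q0]; exists q.
Qed.

Lemma max_pt (K : {set V} -> nat) : exists2 q : V, q != 0 & forall x : V, x != 0 -> (K (sp x) <= K (sp q))%N.
Proof.
have [q0 q00] := nz_exists.
have h : (0 < #|[pred y : V | y != 0%R]|)%N by apply/card_gt0P; exists q0.
have [q qA qm] := eq_bigmax_cond (fun x => K (sp x)) h.
exists q; first by move: qA; rewrite inE.
move=> x x0; rewrite -qm; apply: (@leq_bigmax_cond _ [pred y : V | y != 0%R] (fun x => K (sp x))).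
by rewrite inE.
Qed.

Lemma UB (K : {set V} -> nat) w : admissible 1 w K ->
  exists s, (card_ms K + 12 * s <= 13 * minn w (4 * s))%N.
Proof.
move=> adm; have [q q0 qm] := max_pt K.
exists (K (sp q)); apply: A_bound => // S hS.
rewrite leq_min adm //= line_le4 //.
Qed.

Lemma UB3 (K : {set V} -> nat) w : admissible 1 w K ->
  (card_ms K <= 13 * w - 12 * ((w + 3) %/ 4))%N.
Proof. move=> /UB [s h]. lia. Qed.

Lemma sum_lt (P : pred V) (f : V -> nat) c : (\sum_(i | P i) f i < #|P| * c)%N -> exists2 i, P i & (f i < c)%N.
Proof.
move=> h; apply/exists_inP; apply: contraLR h; rewrite negb_exists_in => /forall_inP H.
rewrite -leqNgt -sum_const_card; apply: leq_sum => i /H; by rewrite -leqNgt.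
Qed.

Section Cap.
Variable K : {set V} -> nat.
Hypothesis Hpt : forall x : V, x != 0 -> (K (sp x) <= 1)%N.
Hypothesis Hln : forall S, is_proj_subspace 1 S -> (mult_of K S <= 2)%N.

Lemma PL_aux m (C : 'M[F]_(m,4)) (p : V) : \rank C = 3%N -> (p <= C)%MS -> p != 0 -> K (sp p) = 1%N ->
  (mult_of K (sp C) <= 5)%N /\
  (mult_of K (sp C) = 5%N -> forall y : V, (y <= C)%MS -> ~~ (y <= p)%MS -> mult_of K (sp (col_mx p y)) = 2%N).
Proof.
move=> rC pC p0 Kp.
have hSI := SI (fun x => K (sp x)) pC.
rewrite rC rank_rV p0 sum_pt // Kp in hSI.
have hsp := sum_split (fun x => K (sp x)) pC.
rewrite sum_pt // Kp L0K in hsp.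
have e1 : (3 ^ 3 - 3 ^ 1 = 24)%N by [].
have e2 : (3 ^ 2 - 3 ^ 1 = 6)%N by [].
rewrite e1 e2 in hSI.
have c24 : #|[pred y : V | (y <= C)%MS && ~~ (y <= p)%MS]| = 24%N by rewrite card_diff // rC rank_rV p0.
have hle : forall y : V, (y <= C)%MS && ~~ (y <= p)%MS ->
   (\sum_(x : V | (x <= col_mx p y)%MS && (x != 0%R)) K (sp x) <= 4)%N.
  move=> y /andP [_ yp]; rewrite L0K; have := Hln (is_line2 p0 yp); lia.
have hsum : (\sum_(y : V | (y <= C)%MS && ~~ (y <= p)%MS)
        \sum_(x : V | (x <= col_mx p y)%MS && (x != 0%R)) K (sp x) <= 24 * 4)%N.
  by rewrite -c24; apply: sum_le.
split; first by lia.
move=> e5 y yC yp.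
have hge : (#|[pred y : V | (y <= C)%MS && ~~ (y <= p)%MS]| * 4 <= \sum_(y : V | (y <= C)%MS && ~~ (y <= p)%MS)
        \sum_(x : V | (x <= col_mx p y)%MS && (x != 0%R)) K (sp x))%N by rewrite c24; lia.
have := sum_eq_max hle hge; move=> /(_ y); rewrite yC yp L0K => /(_ isT); lia.
Qed.

Lemma PL m (C : 'M[F]_(m,4)) : \rank C = 3%N -> (mult_of K (sp C) <= 4)%N.
Proof.
move=> rC; rewrite leqNgt; apply/negP => big.
have hs := L0K C K.
have [p /andP [pC p0] Kp] : exists2 p : V, (p <= C)%MS && (p != 0) & (0 < K (sp p))%N.
  by apply: sum_pos; rewrite hs; lia.
have Kp1 : K (sp p) = 1%N by have := Hpt p0; lia.
have [le5 all2p] := PL_aux rC pC p0 Kp1.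
have e5 : mult_of K (sp C) = 5%N by lia.
have all2 : forall z : V, (z <= C)%MS -> z != 0 -> K (sp z) = 1%N ->
    forall y : V, (y <= C)%MS -> ~~ (y <= z)%MS -> mult_of K (sp (col_mx z y)) = 2%N.
  by move=> z zC z0 Kz; have [_ ] := PL_aux rC zC z0 Kz; apply.
have [x /andP [xC x0] Kx] : exists2 x : V, (x <= C)%MS && (x != 0) & (K (sp x) < 1)%N.
  by apply: sum_lt; rewrite card_nz rC hs e5.
have Kx0 : K (sp x) = 0%N by lia.
have hSI := SI (fun x => K (sp x)) xC.
have hsp := sum_split (fun x => K (sp x)) xC.
rewrite sum_pt // Kx0 L0K e5 in hsp.
rewrite rC rank_rV x0 sum_pt // Kx0 in hSI.
have e1 : (3 ^ 3 - 3 ^ 1 = 24)%N by [].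
have e2 : (3 ^ 2 - 3 ^ 1 = 6)%N by [].
rewrite e1 e2 in hSI.
have h60 : (\sum_(y : V | (y <= C)%MS && ~~ (y <= x)%MS)
        \sum_(z : V | (z <= col_mx x y)%MS && (z != 0%R)) K (sp z) = 60)%N by lia.
set g := fun y : V => if (y <= C)%MS && ~~ (y <= x)%MS then mult_of K (sp (col_mx x y)) else 0%N.
have e30 : (\sum_(y : V | (y <= C)%MS && (y != 0%R)) g y = 30)%N.
  rewrite (bigID (fun y : V => (y <= x)%MS)) /=.
  rewrite big1; last by move=> y /andP [_ yx]; rewrite /g yx andbF.
  rewrite add0n.
  have : (\sum_(y : V | (y <= C)%MS && ~~ (y <= x)%MS) 2 * mult_of K (sp (col_mx x y)) = 60)%N.
    rewrite -h60; apply: eq_bigr => y _; by rewrite L0K.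
  rewrite -big_distrr /= => h60b.
  have h30 : (\sum_(y : V | (y <= C)%MS && ~~ (y <= x)%MS) mult_of K (sp (col_mx x y)) = 30)%N by apply/eqP; rewrite -(eqn_pmul2l (isT : (0 < 2)%N)) h60b.
  rewrite -h30; apply: eq_big => y.
    case yx: (y <= x)%MS; rewrite ?andbF ?andbT //=.
    case: (y <= C)%MS => //=; by apply: contraFN yx => /eqP ->; rewrite sub0mx.
  by move=> /andP [/andP [yC _] yx]; rewrite /g yC yx.
have g02 : forall y : V, y != 0 -> (g y == 0%N) || (g y == 2%N).
  move=> y y0; rewrite /g; case: ifP => [/andP [yC yx]|_]; last by [].
  have hl := Hln (is_line2 x0 yx).
  case e0 : (mult_of K (sp (col_mx x y)) == 0%N) => //=.
  have [z /andP [zl z0] Kz] : exists2 z : V, (z <= col_mx x y)%MS && (z != 0) & (0 < K (sp z))%N.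
    by apply: sum_pos; rewrite L0K; move: e0; case: (mult_of _ _) => //= n _; lia.
  have Kz1 : K (sp z) = 1%N by have := Hpt z0; lia.
  have zx : ~~ (z <= x)%MS.
    apply/negP => zx; move: Kz1; rewrite (sp_eq zx (pt_sub_pt z0 zx)) Kx0 //.
  have zC : (z <= C)%MS by apply: submx_trans zl _; rewrite col_mx_sub xC yC.
  have xz : ~~ (x <= z)%MS.
    apply/negP => xz; move: Kz1; rewrite (sp_eq (pt_sub_pt x0 xz) xz) Kx0 //.
  have := all2 z zC z0 Kz1 x xC xz.
  have yc : (y <= col_mx x z)%MS by apply: exch.
  rewrite (@sp_eq _ _ (col_mx z x) (col_mx x y)) => [->//| |].
    by rewrite col_mx_sub zl sub_colL.
  rewrite col_mx_sub sub_colR /=; apply: submx_trans yc _.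
  by rewrite col_mx_sub sub_colR sub_colL.
have : (4 %| \sum_(y : V | (y <= C)%MS && (y != 0%R)) g y)%N.
  rewrite sum_pts; apply: dvdn_sum => P /andP [/is_pointP [q q0 ->] _].
  rewrite sum_fiber //.
  have -> : g (- q) = g q.
    rewrite /g !(eqmx_opp q).
    have -> : sp (col_mx x (- q)) = sp (col_mx x q); last by [].
    apply: sp_eq; rewrite col_mx_sub sub_colL /=.
      by rewrite (eqmx_opp q) sub_colR.
    by rewrite -[q in (q <= _)%MS]opprK (eqmx_opp (- q)) sub_colR.
  by case/orP: (g02 q q0) => /eqP ->.
by rewrite e30.
Qed.

End Cap.

Lemma cap_bound (K : {set V} -> nat) :
  (forall x : V, x != 0 -> (K (sp x) <= 1)%N) ->
  (forall S, is_proj_subspace 1 S -> (mult_of K S <= 2)%N) ->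
  (card_ms K <= 10)%N.
Proof.
move=> Hpt Hln; rewrite leqNgt; apply/negP => big.
have hall := sum_all K.
have [q /andP [_ q0] Kq] : exists2 q : V, (q <= (1%:M : 'M[F]_4))%MS && (q != 0) & (0 < K (sp q))%N.
  by apply: sum_pos; rewrite hall; lia.
have Kq1 : K (sp q) = 1%N by have := Hpt _ q0; lia.
have hSI := SI (fun x => K (sp x)) (submx1 q).
rewrite mxrank1 rank_rV q0 sum_pt // Kq1 in hSI.
have e1 : (3 ^ 4 - 3 ^ 1 = 78)%N by [].
have e2 : (3 ^ 2 - 3 ^ 1 = 6)%N by [].
rewrite e1 e2 in hSI; cbv beta in hSI.
have hsp := sum_all_split K q0; rewrite Kq1 in hsp.
have c78 : #|[pred y : V | (y <= (1%:M : 'M[F]_4))%MS && ~~ (y <= q)%MS]| = 78%N.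
  by rewrite card_diff ?submx1 // mxrank1 rank_rV q0.
have [y /andP [_ yq] hy] : exists2 y : V, (y <= (1%:M : 'M[F]_4))%MS && ~~ (y <= q)%MS &
    (2 < \sum_(x : V | (x <= col_mx q y)%MS && (x != 0%R)) K (sp x))%N.
  apply: sum_gt; rewrite c78 hSI.
  move: hsp big; generalize (card_ms K) => n. move=> hsp big.
  move: hsp; set S1 := (\sum_(x | _) _)%N => hsp. lia.
rewrite L0K in hy.
have ml := Hln _ (is_line2 q0 yq).
have m2 : mult_of K (sp (col_mx q y)) = 2%N by lia.
set B := col_mx q y.
have rB : \rank B = 2%N by have := rank_col_notin yq; rewrite rank_rV q0.
have hSI2 := SI (fun x => K (sp x)) (submx1 B).
rewrite mxrank1 rB L0K m2 in hSI2.
have e3 : (3 ^ 4 - 3 ^ 2 = 72)%N by [].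
have e4 : (3 ^ 3 - 3 ^ 2 = 18)%N by [].
rewrite e3 e4 in hSI2; cbv beta in hSI2.
have hsp2 := sum_split (fun x => K (sp x)) (submx1 B).
rewrite L0K m2 hall in hsp2.
have c72 : #|[pred z : V | (z <= (1%:M : 'M[F]_4))%MS && ~~ (z <= B)%MS]| = 72%N.
  by rewrite card_diff ?submx1 // mxrank1 rB.
have hle : (\sum_(z : V | (z <= (1%:M : 'M[F]_4))%MS && ~~ (z <= B)%MS)
   \sum_(x : V | (x <= col_mx B z)%MS && (x != 0%R)) K (sp x) <= 72 * 8)%N.
  rewrite -c72; apply: sum_le => z /andP [_ zB].
  have rC : \rank (col_mx B z) = 3%N by have := rank_col_notin zB; rewrite rB.
  rewrite L0K; have := PL Hpt Hln rC; lia.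
rewrite hSI2 in hle; move: hle hsp2 big; set S2 := (\sum_(x | _) _)%N => hle hsp2 big. lia.
Qed.

Lemma UB2 (K : {set V} -> nat) : admissible 1 2 K -> (card_ms K <= 10)%N.
Proof.
move=> adm; have [q q0 qm] := max_pt K.
case: (leqP (K (sp q)) 1) => hs.
  apply: cap_bound => [x x0|S hS]; last exact: adm.
  exact: leq_trans (qm x x0) hs.
have := A_bound q0 adm; lia.
Qed.

Lemma sum_ind (P Q : pred V) (b : nat) :
  (\sum_(i | P i) b * (Q i : nat) = b * #|[pred i | P i && Q i]|)%N.
Proof.
rewrite -big_distrr /=; congr (_ * _)%N.
rewrite (bigID Q) /= [X in (_ + X)%N]big1; last by move=> i /andP [_ /negbTE ->].
rewrite addn0 -sum1_card; apply: eq_big => i; first by rewrite inE.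
by move=> /andP [_ ->].
Qed.

Definition Kc (a b c : nat) (H : {set V}) (P0 : {set V}) (P : {set V}) : nat :=
  (a + b * (~~ (P \subset H) : nat) + c * (P == P0 : nat))%N.

Lemma exists_plane : exists C : 'M[F]_(3,4), \rank C = 3%N.
Proof.
have [q q0] := nz_exists.
have : (0 < #|[pred y : V | (y <= (1%:M : 'M[F]_4))%MS && ~~ (y <= q)%MS]|)%N.
  by rewrite card_diff ?submx1 // mxrank1 rank_rV q0.
case/card_gt0P => y; rewrite inE => /andP [_ yq].
have rB : \rank (col_mx q y) = 2%N by have := rank_col_notin yq; rewrite rank_rV q0.
have : (0 < #|[pred z : V | (z <= (1%:M : 'M[F]_4))%MS && ~~ (z <= col_mx q y)%MS]|)%N.
  by rewrite card_diff ?submx1 // mxrank1 rB.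
case/card_gt0P => z; rewrite inE => /andP [_ zB].
exists (col_mx (col_mx q y) z); by have := rank_col_notin zB; rewrite rB.
Qed.

Lemma fiber_card (q : V) : q != 0 -> #|[pred x : V | (x != 0) && (sp x == sp q)]| = 2%N.
Proof.
move=> q0; have := cards2 q (- q); rewrite neg_neq // => e; rewrite [RHS](esym e) -fiber //.
by apply: eq_card => x; rewrite !inE.
Qed.

Lemma construct (a b c : nat) : exists K : {set V} -> nat,
  card_ms K = (40 * a + 27 * b + c)%N /\
  forall S, is_proj_subspace 1 S -> (mult_of K S <= 4 * a + 3 * b + c)%N.
Proof.
have [C rC] := exists_plane.
have [q0 q00] := nz_exists.
exists (Kc a b c (sp C) (sp q0)).
have hK : forall x : V, x != 0 -> Kc a b c (sp C) (sp q0) (sp x) =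
   (a + b * (~~ (x <= C)%MS : nat) + c * (sp x == sp q0 : nat))%N.
  by move=> x x0; rewrite /Kc sp_sub.
split.
  have := sum_all (Kc a b c (sp C) (sp q0)).
  rewrite (eq_bigr (fun x : V => a + b * (~~ (x <= C)%MS : nat) + c * (sp x == sp q0 : nat)))%N; last first.
    by move=> x /andP [_ x0]; rewrite hK.
  rewrite !big_split /= sum_const_card !sum_ind card_nz mxrank1.
  have -> : #|[pred i : V | (i <= (1%:M : 'M[F]_4))%MS && (i != 0%R) && ~~ (i <= C)%MS]| = 54%N.
    have h := card_diff (submx1 C); rewrite mxrank1 rC in h.
    rewrite (_ : 54 = 3 ^ 4 - 3 ^ 3)%N // -h.
    apply: eq_card => x; rewrite !inE submx1 /=.
    case xC: (x <= C)%MS; rewrite ?andbF ?andbT //=.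
    by apply: contraFN xC => /eqP ->; rewrite sub0mx.
  have -> : #|[pred i : V | (i <= (1%:M : 'M[F]_4))%MS && (i != 0%R) && (sp i == sp q0)]| = 2%N.
    rewrite [RHS](esym (fiber_card q00)); apply: eq_card => x; by rewrite !inE submx1.
  lia.
move=> S /lineP [A rA ->].
have := L0K A (Kc a b c (sp C) (sp q0)).
rewrite (eq_bigr (fun x : V => a + b * (~~ (x <= C)%MS : nat) + c * (sp x == sp q0 : nat)))%N; last first.
  by move=> x /andP [_ x0]; rewrite hK.
rewrite !big_split /= sum_const_card !sum_ind card_nz rA.
have h1 : (#|[pred i : V | (i <= A)%MS && (i != 0%R) && ~~ (i <= C)%MS]| <= 6)%N.
  have rcap : (1 <= \rank (A :&: C)%MS)%N.
    have := mxrank_sum_cap A C; rewrite rA rC.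
    have := rank_leq_col (A + C)%MS; lia.
  have e : #|[pred i : V | (i <= A)%MS && (i != 0%R) && ~~ (i <= C)%MS]| =
        #|[pred i : V | (i <= A)%MS && ~~ (i <= (A :&: C))%MS]|.
    apply: eq_card => x; rewrite !inE sub_capmx.
    case xA: (x <= A)%MS => //=; case xC: (x <= C)%MS => /=.
    by rewrite andbF. rewrite andbT; by apply: contraFN xC => /eqP ->; rewrite sub0mx.
  rewrite e card_diff ?capmxSl // rA.
  have : (3 <= 3 ^ \rank (A :&: C)%MS)%N by rewrite -{1}(expn1 3) leq_pexp2l.
  lia.
have h2 : (#|[pred i : V | (i <= A)%MS && (i != 0%R) && (sp i == sp q0)]| <= 2)%N.
  rewrite [X in (_ <= X)%N](esym (fiber_card q00)); apply: subset_leq_card; apply/subsetP => x; rewrite !inE.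
  by case/andP => /andP [_ ->] ->.
move=> e2.
have : (2 * mult_of (Kc a b c (sp C) (sp q0)) (sp A) <= 2 * (4 * a + 3 * b + c))%N.
  rewrite -e2.
  have : (b * #|[pred i : V | (i <= A)%MS && (i != 0%R) && ~~ (i <= C)%MS]| <= b * 6)%N by rewrite leq_mul2l h1 orbT.
  have : (c * #|[pred i : V | (i <= A)%MS && (i != 0%R) && (sp i == sp q0)]| <= c * 2)%N by rewrite leq_mul2l h2 orbT.
  lia.
lia.
Qed.

Local Close Scope ring_scope.

Lemma gform d : griesmer_g 3 (3 - 1) 3.+1 d = d + (d + 11) %/ 12 + (d + 35) %/ 36.
Proof.
rewrite /griesmer_g /=.
rewrite big_ltn // big_ltn // big_geq //.
by rewrite /ceil_div /vq /= addn0 addnA.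
Qed.

Definition fw (w : nat) := 13 * w - 12 * ((w + 3) %/ 4).

Lemma griesmer_fw w : 3 <= w -> griesmer_ub 3 3 1 w (fw w).
Proof.
move=> w3; rewrite /griesmer_ub gform /fw; split.
  lia.
move=> n'; rewrite gform; lia.
Qed.

Local Open Scope ring_scope.

Local Close Scope ring_scope.

Lemma abc w : 3 <= w -> exists a b c, 40 * a + 27 * b + c = fw w /\ 4 * a + 3 * b + c <= w.
Proof.
move=> w3; rewrite /fw.
have e := divn_eq w 4; have lt := ltn_pmod w (isT : 0 < 4).
move: e lt; set k := w %/ 4; set r := w %% 4 => e lt.
case: r e lt => [|[|[|[|r]]]] e lt //.
- exists k, 0, 0; lia.
- exists k, 0, 1; lia.
- exists k.-1, 2, 0; lia.
- exists k, 1, 0; lia.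
Qed.

Lemma ism_w w : 3 <= w -> is_m 'F_3 3 1 w (fw w).
Proof.
move=> w3; split.
  have [a [b [c [h1 h2]]]] := abc w3.
  have [K [cK lK]] := construct a b c.
  exists K; split; last by rewrite cK.
  by move=> S hS; apply: leq_trans (lK S hS) h2.
move=> K adm; exact: UB3 adm.
Qed.

Local Open Scope ring_scope.

Definition s3 : seq F := [:: 0; 1; -1].
Lemma mem_s3 (a : F) : a \in s3.
Proof. by case: (F3_cases a) => ->. Qed.

Lemma sumF3 (f : F -> nat) : (\sum_(a : F) f a = f 0%R + f 1%R + f (-1)%R)%N.
Proof.
rewrite (perm_big s3) /=; first by rewrite /s3 !big_cons big_nil addn0 addnA.
apply: uniq_perm; first exact: index_enum_uniq.
  by vm_compute.
by move=> a; rewrite mem_index_enum mem_s3.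
Qed.

Definition Qc (a b c d : F) : F := a * a + b * b + c * d.
Definition Bc (a0 a1 a2 a3 b0 b1 b2 b3 : F) : F := 2 * (a0 * b0) + 2 * (a1 * b1) + a2 * b3 + a3 * b2.

Definition i0 : 'I_4 := @Ordinal 4 0 isT.
Definition i1 : 'I_4 := @Ordinal 4 1 isT.
Definition i2 : 'I_4 := @Ordinal 4 2 isT.
Definition i3 : 'I_4 := @Ordinal 4 3 isT.

Definition Qv (v : V) : F := Qc (v 0 i0) (v 0 i1) (v 0 i2) (v 0 i3).

Lemma Qv_scale (a : F) (v : V) : Qv (a *: v) = a * a * Qv v.
Proof. rewrite /Qv /Qc !mxE; ring. Qed.

Definition KQ (P : {set V}) : nat := [exists v in P, (v != 0) && (Qv v == 0)].

Lemma KQ_sp (x : V) : x != 0 -> KQ (sp x) = (Qv x == 0 : nat).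
Proof.
move=> x0; rewrite /KQ; congr nat_of_bool.
apply/exists_inP/idP => [[v]|qx]; last by exists x; rewrite ?in_sp ?submx_refl ?x0.
rewrite in_sp => /sub_rVP [a ->] /andP [ax0]; rewrite Qv_scale mulf_eq0 => /orP [|//].
by rewrite mulf_eq0 orbb => /eqP a0; move: ax0; rewrite a0 scale0r eqxx.
Qed.

Definition mk4 (t : F * F * F * F) : V :=
  \row_(j < 4) nth 0 [:: t.1.1.1; t.1.1.2; t.1.2; t.2] j.
Definition un4 (x : V) : F * F * F * F := (x 0 i0, x 0 i1, x 0 i2, x 0 i3).

Lemma mk4K : cancel mk4 un4.
Proof. by case=> [[[a b] c] d]; rewrite /un4 !mxE. Qed.
Lemma un4K : cancel un4 mk4.
Proof.
move=> x; apply/matrixP => i j; rewrite !mxE ord1.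
by case: j => [[|[|[|[|j]]]] hj] //=; congr (x 0 _); apply: val_inj.
Qed.

Lemma sum_pair (X Y : finType) (h : X * Y -> nat) :
  (\sum_(t : X * Y) h t = \sum_(x : X) \sum_(y : Y) h (x, y))%N.
Proof. by rewrite pair_bigA; apply: eq_bigr => -[]. Qed.

Lemma sumV (g : V -> nat) :
  (\sum_(x : V) g x = \sum_(a : F) \sum_(b : F) \sum_(c : F) \sum_(d : F) g (mk4 (a, b, c, d)))%N.
Proof.
rewrite (reindex mk4) /=; last by exists un4 => x _; [exact: mk4K | exact: un4K].
by rewrite !sum_pair.
Qed.

Lemma card_quadric : #|[pred x : V | (x != 0) && (Qv x == 0)]| = 20%N.
Proof.
rewrite -sum1_card (big_mkcond) /= sumV.
have h : forall a b c d : F, (if (mk4 (a,b,c,d) \in [pred x : V | (x != 0%R) && (Qv x == 0%R)]) then 1%N else 0%N) =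
   nat_of_bool (((a,b,c,d) != (0%R,0%R,0%R,0%R)) && (Qc a b c d == 0%R)).
  move=> a b c d; rewrite inE.
  have -> : Qv (mk4 (a,b,c,d)) = Qc a b c d by rewrite /Qv !mxE.
  have -> : (mk4 (a,b,c,d) != 0) = ((((a,b),c),d) != (0,0,0,0)).
    by rewrite -(inj_eq (can_inj un4K)) mk4K; congr (~~ (_ == _)); rewrite /un4 !mxE.
  by case: (_ && _).
under eq_bigr do under eq_bigr do under eq_bigr do under eq_bigr do rewrite h.
rewrite !sumF3. by vm_compute.
Qed.

Definition pairs9 : seq (F * F) := [seq (a, b) | a <- s3, b <- s3].
Definition depc (a0 a1 a2 a3 b0 b1 b2 b3 : F) : bool :=
  has (fun p : F * F => (p != (0, 0)) &&
    [&& p.1 * a0 + p.2 * b0 == 0, p.1 * a1 + p.2 * b1 == 0,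
        p.1 * a2 + p.2 * b2 == 0 & p.1 * a3 + p.2 * b3 == 0]) pairs9.
Definition bf2 : bool :=
  all (fun a0 => all (fun a1 => all (fun a2 => all (fun a3 =>
  all (fun b0 => all (fun b1 => all (fun b2 => all (fun b3 =>
    [|| Qc a0 a1 a2 a3 != 0, Qc b0 b1 b2 b3 != 0, Bc a0 a1 a2 a3 b0 b1 b2 b3 != 0 |
        depc a0 a1 a2 a3 b0 b1 b2 b3]) s3) s3) s3) s3) s3) s3) s3) s3.
Lemma bf2_true : bf2 = true.
Proof. by vm_compute. Qed.

Lemma BF2 (a0 a1 a2 a3 b0 b1 b2 b3 : F) : Qc a0 a1 a2 a3 = 0 -> Qc b0 b1 b2 b3 = 0 ->
  Bc a0 a1 a2 a3 b0 b1 b2 b3 = 0 ->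
  exists2 p : F * F, p != (0, 0) &
    [/\ p.1 * a0 + p.2 * b0 = 0, p.1 * a1 + p.2 * b1 = 0,
        p.1 * a2 + p.2 * b2 = 0 & p.1 * a3 + p.2 * b3 = 0].
Proof.
move=> qa qb bab; have := bf2_true; rewrite /bf2.
move=> /allP H; have {H} := H a0 (mem_s3 a0).
move=> /allP H; have {H} := H a1 (mem_s3 a1).
move=> /allP H; have {H} := H a2 (mem_s3 a2).
move=> /allP H; have {H} := H a3 (mem_s3 a3).
move=> /allP H; have {H} := H b0 (mem_s3 b0).
move=> /allP H; have {H} := H b1 (mem_s3 b1).
move=> /allP H; have {H} := H b2 (mem_s3 b2).
move=> /allP H; have {H} := H b3 (mem_s3 b3).
rewrite qa qb bab !eqxx /= => /hasP [p _ /andP [p0 /and4P [/eqP h0 /eqP h1 /eqP h2 /eqP h3]]].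
by exists p.
Qed.

Lemma Q_form (a b : F) (a0 a1 a2 a3 b0 b1 b2 b3 : F) :
  Qc (a * a0 + b * b0) (a * a1 + b * b1) (a * a2 + b * b2) (a * a3 + b * b3) =
  a * a * Qc a0 a1 a2 a3 + a * b * Bc a0 a1 a2 a3 b0 b1 b2 b3 + b * b * Qc b0 b1 b2 b3.
Proof. rewrite /Qc /Bc; ring. Qed.

Lemma BF3 (al be ga : F) : ~~ [&& al == 0, be == 0 & ga == 0] ->
  (\sum_(p : F * F) nat_of_bool ((p != (0, 0)) && (p.1 * p.1 * al + p.1 * p.2 * be + p.2 * p.2 * ga == 0))%R <= 4)%N.
Proof.
rewrite sum_pair !sumF3.
by case: (F3_cases al) => ->; case: (F3_cases be) => ->; case: (F3_cases ga) => ->; vm_compute.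
Qed.

Section Line.
Variable A : 'M[F]_(2,4).
Hypothesis rA : \rank A = 2%N.

Definition rw (p : F * F) : 'rV[F]_2 := \row_(j < 2) nth 0 [:: p.1; p.2] j.
Definition lin (p : F * F) : V := rw p *m A.

Lemma lin_inj : injective lin.
Proof.
have : row_free A by rewrite /row_free rA.
case/row_freeP => B AB p q; rewrite /lin => e.
have : rw p = rw q by rewrite -[rw p]mulmx1 -[rw q]mulmx1 -AB !mulmxA e.
move/matrixP => h; have := h 0 0; have := h 0 1; rewrite !mxE /=.
by case: p {e h} => a b; case: q => c d /= -> ->.
Qed.

Lemma lin_entry (p : F * F) (k : 'I_4) : lin p 0 k = p.1 * A 0 k + p.2 * A 1 k.
Proof.
rewrite /lin mxE big_ord_recl big_ord_recl big_ord0 addr0 !mxE /=.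
by congr (_ * A _ _ + _ * A _ _); apply: val_inj.
Qed.

Lemma lin_sub (p : F * F) : (lin p <= A)%MS.
Proof. exact: submxMl. Qed.

Lemma lin_surj (x : V) : (x <= A)%MS -> exists p, x = lin p.
Proof.
case/submxP => r ->; exists (r 0 0, r 0 1); congr (_ *m _).
apply/matrixP => i j; rewrite !mxE ord1.
by case: j => [[|[|j]] hj] //=; congr (r 0 _); apply: val_inj.
Qed.

Lemma lin0 : lin (0, 0) = 0.
Proof. by apply/matrixP => i k; rewrite ord1 lin_entry !mxE !mul0r addr0. Qed.

Lemma Qv_lin (p : F * F) : Qv (lin p) =
  p.1 * p.1 * Qc (A 0 i0) (A 0 i1) (A 0 i2) (A 0 i3) +
  p.1 * p.2 * Bc (A 0 i0) (A 0 i1) (A 0 i2) (A 0 i3) (A 1 i0) (A 1 i1) (A 1 i2) (A 1 i3) +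
  p.2 * p.2 * Qc (A 1 i0) (A 1 i1) (A 1 i2) (A 1 i3).
Proof. by rewrite /Qv !lin_entry Q_form. Qed.

Lemma KQ_line : (mult_of KQ (sp A) <= 2)%N.
Proof.
have := L0K A KQ.
rewrite (eq_bigr (fun x : V => 1 * nat_of_bool (Qv x == 0%R)))%N; last first.
  by move=> x /andP [_ x0]; rewrite KQ_sp // mul1n.
rewrite sum_ind mul1n.
have -> : #|[pred i : V | (i <= A)%MS && (i != 0%R) && (Qv i == 0%R)]| =
     #|[set p : F * F | (p != (0%R, 0%R)) && (Qv (lin p) == 0%R)]|.
  rewrite -(card_imset _ lin_inj); apply: eq_card => x; rewrite !inE.
  apply/idP/imsetP.
    case/andP => /andP [xA x0] qx; have [p ep] := lin_surj xA.
    exists p => //; rewrite inE -ep qx andbT.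
    by apply: contraNneq x0 => p0; rewrite ep p0 lin0.
  case=> p; rewrite inE => /andP [p0 qp] ->; rewrite lin_sub qp andbT /=.
  by apply: contraNneq p0 => l0; apply/eqP; apply: lin_inj; rewrite l0 lin0.
rewrite -sum1_card.
pose al := Qc (A 0 i0) (A 0 i1) (A 0 i2) (A 0 i3); pose be := Bc (A 0 i0) (A 0 i1) (A 0 i2) (A 0 i3) (A 1 i0) (A 1 i1) (A 1 i2) (A 1 i3); pose ga := Qc (A 1 i0) (A 1 i1) (A 1 i2) (A 1 i3).
case abc : [&& al == 0, be == 0 & ga == 0].
  case/and3P: abc => /eqP ha /eqP hb /eqP hg.
  have [p p0 [h0 h1 h2 h3]] := BF2 ha hg hb.
  exfalso; move/negP: p0; apply; apply/eqP; apply: lin_inj; rewrite lin0.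
  apply/matrixP => i k; rewrite ord1 lin_entry !mxE.
  by case: k => [[|[|[|[|k]]]] hk] //; [move: h0|move: h1|move: h2|move: h3];
    rewrite /i0 /i1 /i2 /i3; congr (_ + _ = _); congr (_ * A _ _); apply: val_inj.
have := BF3 (negbT abc).
rewrite (eq_bigr (fun p : F * F => nat_of_bool ((p != (0%R, 0%R)) && (Qv (lin p) == 0%R)))); last first.
  by move=> p _; rewrite Qv_lin.
rewrite -big_mkcond /=.
have -> : (\sum_(i in [set p : F * F | (p != (0%R, 0%R)) && (Qv (lin p) == 0%R)]) 1 =
   \sum_(p : F * F | (p != (0%R, 0%R)) && (Qv (lin p) == 0%R)) 1)%N.
  by apply: eq_bigl => p; rewrite inE.
move=> h1 h2; have : (2 * mult_of KQ (sp A) <= 4)%N by rewrite -h2. lia.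
Qed.

End Line.

Lemma card_KQ : card_ms KQ = 10%N.
Proof.
have := sum_all KQ.
rewrite (eq_bigr (fun x : V => 1 * nat_of_bool (Qv x == 0%R)))%N; last first.
  by move=> x /andP [_ x0]; rewrite KQ_sp // mul1n.
rewrite sum_ind mul1n.
have -> : #|[pred i : V | (i <= (1%:M : 'M[F]_4))%MS && (i != 0%R) && (Qv i == 0%R)]| = 20%N.
  rewrite -card_quadric; apply: eq_card => x; by rewrite !inE submx1.
lia.
Qed.

Lemma ism2 : is_m 'F_3 3 1 2 10.
Proof.
split.
  exists KQ; split; last exact: card_KQ.
  by move=> S /lineP [A rA ->]; apply: KQ_line.
move=> K adm; exact: UB2 adm.
Qed.

Local Close Scope ring_scope.

Theorem mainTheorem10 :
  (forall w : nat, 3 <= w ->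
     exists n : nat, griesmer_ub 3 3 1 w n /\ is_m 'F_3 3 1 w n)
  /\ is_m 'F_3 3 1 2 10.
Proof.
split; last exact: ism2.
move=> w w3; exists (fw w); split; [exact: griesmer_fw | exact: ism_w].
Qed.
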